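(* Let $q\in\mathbb{C}$ with $0<|q|<1$, let $N$ be a nonnegative integer and $\rho_1,\rho_2$ complex parameters (such that all terms below are well defined). Let $(\alpha_n)_{n\in\mathbb{Z}}$ and $(\beta_n)_{n\ge0}$ be sequences related by \[ \beta_n=\sum_{r=-\infty}^\infty\frac{\alpha_r}{(q)_{n-r}(q)_{n+r+1}}\qquad\text{for all } n\ge 0. \] Then \[ \sum_{n=-\infty}^\infty\frac{(\rho_1,\rho_2, q^{-N})_n}{(q^2/\rho_1, q^2/\rho_2, q^{N+2})_n} \left(\frac{q^{2+N}}{\rho_1\rho_2}\right)^n(-1)^nq^{-\binom{n}{2}}\frac{\alpha_n}{1-q} =\frac{(q^2, q^2/\rho_1\rho_2)_N}{(q^2/\rho_1, q^2/\rho_2)_N} \sum_{n\geq 0}\frac{(\rho_1, \rho_2, q^{-N})_n\,q^n\beta_n}{(\rho_1\rho_2q^{-N-1})_n}. \]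
   Context: For an integer $n$, the $q$-shifted factorial is $(a)_n=(a;q)_n$ with $(a)_0=1$, $(a)_n=(1-a)(1-aq)\cdots(1-aq^{n-1})$ for $n\ge1$, and $(a)_n=[(1-aq^{-1})(1-aq^{-2})\cdots(1-aq^{n})]^{-1}$ for $n\le -1$; in particular $1/(q)_n=0$ for $n<0$. Also $(a_1,\ldots,a_m)_n=(a_1)_n\cdots(a_m)_n$, and $\binom{n}{2}=n(n-1)/2$ for all integers $n$. *)

(* Defs.v *)
From mathcomp Require Import all_boot all_order all_algebra.
Set Implicit Arguments. Unset Strict Implicit. Unset Printing Implicit Defensive.
Import Order.TTheory GRing.Theory Num.Theory.
Local Open Scope ring_scope.

(* q-shifted factorial (a;q)_n for n : int.
   n >= 0 : (1-a)(1-aq)...(1-aq^(n-1));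
   n = -(k+1) < 0 : [(1-aq^-1)(1-aq^-2)...(1-aq^-(k+1))]^-1.
   (MathComp convention 0^-1 = 0 makes 1/(q;q)_n = 0 for n < 0.) *)
Definition qpoch (C : fieldType) (q a : C) (n : int) : C :=
  match n with
  | Posz k => \prod_(i < k) (1 - a * q ^+ i)
  | Negz k => (\prod_(i < k.+1) (1 - a * q ^- i.+1))^-1
  end.

Definition binom2 (n : int) : int := ((n * (n - 1)) %/ 2)%Z.

Definition zsum (C : fieldType) (M : nat) (f : int -> C) : C :=
  \sum_(i < (M + M).+1) f (i%:Z - M%:Z).

(* Main.v *)
Require Import Defs.
From mathcomp Require Import all_boot all_order all_algebra.
From mathcomp Require Import ring zify.
Import Order.TTheory GRing.Theory Num.Theory.
Set Implicit Arguments. Unset Strict Implicit. Unset Printing Implicit Defensive.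
Local Open Scope ring_scope.

Ltac nz1 := first [assumption | exact: oner_neq0 | by rewrite oppr_eq0 oner_eq0 | apply: expf_neq0; nz1 | apply: mulf_neq0; nz1 | apply: invr_neq0; nz1 | idtac].
Ltac nz := rewrite ?oner_neq0 ?andbT ?andTb; repeat (apply/andP; split); nz1.

Definition pp (C : fieldType) (q a : C) (n : nat) : C :=
  \prod_(i < n) (1 - a * q ^+ i).

Lemma pp0 (C : fieldType) (q a : C) : pp q a 0 = 1.
Proof. by rewrite /pp big_ord0. Qed.

Lemma ppS (C : fieldType) (q a : C) n : pp q a n.+1 = pp q a n * (1 - a * q ^+ n).
Proof. by rewrite /pp big_ord_recr. Qed.

Lemma ppSl (C : fieldType) (q a : C) n : pp q a n.+1 = (1 - a) * pp q (a * q) n.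
Proof.
rewrite /pp big_ord_recl expr0 mulr1; congr (_ * _).
by apply: eq_bigr => i _; rewrite /= exprS mulrA.
Qed.

Lemma ppD (C : fieldType) (q a : C) n k : pp q a (n + k) = pp q a n * pp q (a * q ^+ n) k.
Proof.
elim: k => [|k IH]; first by rewrite addn0 pp0 mulr1.
by rewrite addnS !ppS IH exprD; ring.
Qed.

Lemma pp_neq0 (C : fieldType) (q a : C) n i : pp q a n != 0 -> (i < n)%N -> 1 - a * q ^+ i != 0.
Proof.
move=> h hi; apply: contraNneq h => e.
rewrite /pp (bigD1 (Ordinal hi)) //= e mul0r //.
Qed.

Lemma qX_neq1 (C : numClosedFieldType) (q : C) n : 0 < `|q| < 1 -> (0 < n)%N -> q ^+ n != 1.
Proof.
move=> /andP[h0 h1] hn; apply/eqP => e.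
have := exprn_ilt1 n (normr_ge0 q) h1.
by rewrite -normrX e normr1 ltxx -lt0n hn.
Qed.

Lemma ppq_neq0 (C : numClosedFieldType) (q : C) n : 0 < `|q| < 1 -> pp q q n != 0.
Proof.
move=> hq; rewrite /pp prodf_seq_neq0; apply/allP => i _ /=.
by rewrite -exprS subr_eq0 eq_sym qX_neq1.
Qed.

Lemma nz2 (C : fieldType) (x y : C) : x * y != 0 -> x != 0 /\ y != 0.
Proof. by rewrite mulf_eq0 negb_or => /andP. Qed.

Definition st (C : fieldType) (q A B D : C) m k :=
  pp q q m / (pp q q k * pp q q (m - k)) * pp q A k * pp q B k * D ^+ k
  * pp q D (m - k) * pp q (A * B * D * q ^+ k) (m - k).

Lemma tele (C : fieldType) (H : nat -> C) m :
  \sum_(k < m) (H k.+1 - H k) = H m - H 0%N.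
Proof.
elim: m => [|m IH]; first by rewrite big_ord0 subrr.
by rewrite big_ord_recr /= IH; ring.
Qed.

Lemma sum_recl (C : fieldType) (F : nat -> C) n :
  \sum_(k < n.+1) F k = F 0%N + \sum_(k < n) F k.+1.
Proof. by rewrite big_ord_recl; congr (_ + _); apply: eq_bigr => i _; rewrite lift0. Qed.

Lemma sum_recr (C : fieldType) (F : nat -> C) n :
  \sum_(k < n.+1) F k = \sum_(k < n) F k + F n.
Proof. by rewrite big_ord_recr. Qed.

Lemma saal (C : fieldType) (q A B D : C) (hq : forall n, pp q q n != 0) m :
  \sum_(k < m.+1) st q A B D m k = pp q (A * D) m * pp q (B * D) m.
Proof.
elim: m => [|m IH].
  by rewrite big_ord1 /st /= subnn !pp0 expr0 !mulr1 divr1.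
set rho := (1 - A * D * q ^+ m) * (1 - B * D * q ^+ m).
have -> : pp q (A * D) m.+1 * pp q (B * D) m.+1 = rho * (pp q (A * D) m * pp q (B * D) m).
  rewrite !ppS /rho; ring.
rewrite -IH.
pose H k := - q ^+ (m - k) * (pp q q m / (pp q q k * pp q q (m - k))) * pp q A k.+1
   * pp q B k.+1 * D ^+ k.+1 * pp q D (m - k) * pp q (A * B * D * q ^+ k) (m - k).
have E0 : st q A B D m.+1 0 - rho * st q A B D m 0 = H 0%N.
  rewrite /st /H /rho !subn0 !pp0 !expr0 !mulr1 !ppS !pp0 !expr0 !mulr1 !mul1r.
  have h2 := hq m; have := hq m.+1; rewrite ppS => /nz2[_ h1].
  by field; rewrite h2 h1.
have E2 : st q A B D m.+1 m.+1 = - H m.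
  rewrite /st /H !subnn !pp0 !expr0 !mulr1.
  have h := hq m.+1; have h' := hq m. by field; rewrite h h'.
have E1 : forall k : 'I_m, st q A B D m.+1 (k.+1) - rho * st q A B D m k.+1 = H k.+1 - H k.
  move=> [k hk] /=.
  have [j hm] : exists j, m = (k + j).+1 by exists (m - k.+1)%N; lia.
  have e1 : (m.+1 - k.+1 = j.+1)%N by lia.
  have e2 : (m - k.+1 = j)%N by lia.
  have e3 : (m - k = j.+1)%N by lia.
  rewrite /st /H /rho e1 e2 e3.
  have hk1 := hq k.+1; have hj1 := hq j.+1; have hm1 := hq m.+1; have hm0 := hq m.
  rewrite !(ppS q q) in hk1 hj1 hm1.
  move: hk1 hj1 => /nz2[hk0 hk0'] /nz2[hj0 hj0'].
  rewrite (ppS q q m) (ppS q q k) (ppS q q j) (ppS q A k.+1) (ppS q B k.+1) (ppS q A k) (ppS q B k).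
  rewrite (ppS q D j) (ppS q (A * B * D * q ^+ k.+1) j) (ppSl q (A * B * D * q ^+ k) j).
  rewrite -[A * B * D * q ^+ k * q]mulrA -exprSr.
  rewrite !exprS hm exprS exprD.
  by field; rewrite hk0 hk0' hj0 hj0'.
have S : \sum_(k < m) st q A B D m.+1 k.+1 = rho * \sum_(k < m) st q A B D m k.+1 + (H m - H 0%N).
  rewrite -tele big_distrr -big_split; apply eq_bigr => k _ /=; rewrite -E1; ring.
have E0' : st q A B D m.+1 0 = rho * st q A B D m 0 + H 0%N by rewrite -E0; ring.
rewrite sum_recr sum_recl S sum_recl E2 E0'; ring.
Qed.



Lemma nz_of (C : fieldType) (x y z : C) : x != 0 -> y * z = x -> y != 0.
Proof. by move=> hx e; apply: contraNneq hx => h; rewrite -e h mul0r. Qed.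

Lemma Wlem (C: fieldType) (q r1 r2 : C) N n (hq0 : q != 0) (hr1: r1 != 0) (hr2: r2 != 0)
  (hqq : forall n, pp q q n != 0)
  (hE : forall n, (n <= N)%N -> pp q (r1 * r2 * q ^- N.+1) n != 0)
  (hD : pp q (q ^+ 2 / (r1 * r2)) N != 0) : (n <= N)%N ->
  pp q (q ^- N) n * q ^+ n / pp q (r1 * r2 * q ^- N.+1) n
  = (q ^+ 2 / (r1 * r2)) ^+ n * pp q (q ^+ 2 / (r1 * r2)) (N - n) * pp q q N
     / (pp q q (N - n) * pp q (q ^+ 2 / (r1 * r2)) N).
Proof.
elim: n => [|n IH] hn.
  rewrite subn0 !pp0 !expr0; have := hqq N => h. by field; nz.
have hn' : (n <= N)%N by apply: ltnW.
have [j hj] : exists j, N = (n + j).+1 by exists (N - n.+1)%N; lia.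
have e1 : (N - n = j.+1)%N by lia.
have e2 : (N - n.+1 = j)%N by lia.
have IH' := IH hn'; rewrite e1 in IH'; rewrite e2.
have hEn := hE n.+1 hn; rewrite ppS in hEn; move: hEn => /nz2[hEn hEn'].
have hj1 := hqq j.+1; rewrite ppS in hj1; move: hj1 => /nz2[hj0 hj0'].
have -> : pp q (q ^- N) n.+1 * q ^+ n.+1 / pp q (r1 * r2 * q ^- N.+1) n.+1 =
  (pp q (q ^- N) n * q ^+ n / pp q (r1 * r2 * q ^- N.+1) n)
  * ((1 - q ^- N * q ^+ n) * q / (1 - r1 * r2 * q ^- N.+1 * q ^+ n)).
  rewrite !ppS [q ^+ n.+1]exprS. set Dn := (q ^+ 2 / (r1 * r2)) ^+ n.
  have h3 : q ^+ N.+1 - r1 * r2 * q ^+ n != 0.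
    apply: (nz_of (z := (q ^+ N.+1)^-1) hEn'). field. nz.
  by field; nz.
rewrite IH' !ppS.
have eN : q ^+ N = q ^+ n * q ^+ j * q by rewrite hj exprS exprD; ring.
rewrite [(q ^+ 2 / (r1 * r2)) ^+ n.+1]exprSr [q ^+ N.+1]exprS eN.
set Dn := (q ^+ 2 / (r1 * r2)) ^+ n.
have hN := hqq N.
rewrite [q ^+ N.+1]exprS eN in hEn'.
have h3 : q * (q ^+ j * q) - r1 * r2 != 0.
  apply: (nz_of (z := (q * (q ^+ j * q))^-1) hEn'). field. nz.
field. nz.
Qed.

Lemma Rlem (C: fieldType) (q: C) N s (hq0: q != 0) (hqq: forall n, pp q q n != 0) : (s <= N)%N ->
  pp q (q ^- N) s * q ^+ (N * s) * (-1) ^+ s = q ^+ 'C(s, 2) * pp q q N / pp q q (N - s).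
Proof.
elim: s => [|s IH] hs.
  have -> : 'C(0, 2) = 0%N by []. rewrite subn0 pp0 muln0 !expr0; have := hqq N => h. by field; nz.
have hs' : (s <= N)%N by apply: ltnW.
have [j hj] : exists j, N = (s + j).+1 by exists (N - s.+1)%N; lia.
have e1 : (N - s = j.+1)%N by lia.
have e2 : (N - s.+1 = j)%N by lia.
have IH' := IH hs'; rewrite e1 in IH'; rewrite e2.
have hj1 := hqq j.+1; rewrite ppS in hj1; move: hj1 => /nz2[hj0 hj0'].
have -> : pp q (q ^- N) s.+1 * q ^+ (N * s.+1) * (-1) ^+ s.+1 =
   (pp q (q ^- N) s * q ^+ (N * s) * (-1) ^+ s) * ((1 - q ^- N * q ^+ s) * q ^+ N * (-1)).
  rewrite ppS mulnS exprD exprSr; ring.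
rewrite IH' ppS binS bin1 exprD.
have eN : q ^+ N = q ^+ s * q ^+ j * q by rewrite hj exprS exprD; ring.
rewrite eN.
by field; nz.
Qed.

Lemma ppD_neq0 (C : fieldType) (q r1 r2 : C) N (hq0 : q != 0) (hr1 : r1 != 0) (hr2 : r2 != 0)
  (hE : pp q (r1 * r2 * q ^- N.+1) N != 0) : pp q (q ^+ 2 / (r1 * r2)) N != 0.
Proof.
rewrite /pp prodf_seq_neq0; apply/allP => -[i hi] _ /=.
have hlt : (N - i.+1 < N)%N by lia.
have h := pp_neq0 hE hlt.
have eN : q ^+ N = q ^+ i * q ^+ (N - i.+1) * q by rewrite -exprD -exprSr; congr (_ ^+ _); lia.
rewrite [q ^+ N.+1]exprS eN in h.
apply: (nz_of (z := - (q ^+ 2 / (r1 * r2) * q ^+ i)^-1) h).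
by field; nz.
Qed.

Lemma ppX_neq0 (C : fieldType) (q : C) a n (hqX : forall n, (0 < n)%N -> q ^+ n != 1) :
  (0 < a)%N -> pp q (q ^+ a) n != 0.
Proof.
move=> ha; rewrite /pp prodf_seq_neq0; apply/allP => i _ /=.
by rewrite -exprD subr_eq0 eq_sym hqX // addn_gt0 ha.
Qed.

Definition Kfac (C : fieldType) (q r1 r2 : C) N :=
  pp q (q ^+ 2) N * pp q (q ^+ 2 / (r1 * r2)) N / (pp q (q ^+ 2 / r1) N * pp q (q ^+ 2 / r2) N).
Definition ccP (C : fieldType) (q r1 r2 : C) N s :=
  pp q r1 s * pp q r2 s * pp q (q ^- N) s
  / (pp q (q ^+ 2 / r1) s * pp q (q ^+ 2 / r2) s * pp q (q ^+ (N + 2)) s)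
  * (q ^+ (N + 2) / (r1 * r2)) ^+ s * (-1) ^+ s * (q ^+ 'C(s, 2))^-1 / (1 - q).
Definition Wt (C : fieldType) (q r1 r2 : C) N n :=
  pp q r1 n * pp q r2 n * pp q (q ^- N) n * q ^+ n / pp q (r1 * r2 * q ^- N.+1) n.

Lemma reassoc (C : fieldType) (a b c d e f : C) : a * b * c * d / e / f = a * b * (c * d / e) / f.
Proof. by rewrite !mulrA. Qed.

Lemma mainc (C : fieldType) (q r1 r2 : C) N s
  (hq0 : q != 0) (hqq : forall n, pp q q n != 0) (hqX : forall n, (0 < n)%N -> q ^+ n != 1)
  (hr1 : r1 != 0) (hr2 : r2 != 0)
  (hA : pp q (q ^+ 2 / r1) N != 0) (hB : pp q (q ^+ 2 / r2) N != 0)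
  (hE : forall n, (n <= N)%N -> pp q (r1 * r2 * q ^- N.+1) n != 0) (hs : (s <= N)%N) :
  ccP q r1 r2 N s = Kfac q r1 r2 N *
    \sum_(k < (N - s).+1) (Wt q r1 r2 N (k + s) / (pp q q k * pp q q (k + s + s + 1))).
Proof.
have [m hN] : exists m, N = (s + m)%N by exists (N - s)%N; lia.
have -> : (N - s)%N = m by lia.
have hD := ppD_neq0 hq0 hr1 hr2 (hE N (leqnn N)).
have hC : forall n, pp q (q * q ^+ (s + s + 1)) n != 0 by move=> n; rewrite -exprS ppX_neq0.
have step1 : \sum_(k < m.+1) (Wt q r1 r2 N (k + s) / (pp q q k * pp q q (k + s + s + 1))) =
   (pp q r1 s * pp q r2 s * (q ^+ 2 / (r1 * r2)) ^+ s * pp q q N /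
     (pp q (q ^+ 2 / (r1 * r2)) N * pp q q (s + s + 1) * pp q q m * pp q (q * q ^+ (s + s + 1)) m))
   * \sum_(k < m.+1) st q (r1 * q ^+ s) (r2 * q ^+ s) (q ^+ 2 / (r1 * r2)) m k.
  rewrite big_distrr; apply: eq_bigr => -[k hk] _ /=.
  have hks : (k + s <= N)%N by lia.
  have eW := Wlem hq0 hr1 hr2 hqq hE hD hks.
  have e' : (N - (k + s) = m - k)%N by lia.
  have hEk := hE _ hks.
  rewrite /Wt reassoc eW e'.
  have -> : (k + s + s + 1 = (s + s + 1) + k)%N by lia.
  rewrite (addnC k s) !(ppD q _ s k) (ppD q q (s + s + 1) k) exprD.
  rewrite /st.
  have -> : r1 * q ^+ s * (r2 * q ^+ s) * (q ^+ 2 / (r1 * r2)) = q * q ^+ (s + s + 1).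
    by rewrite !exprD expr1; field; nz.
  have -> : pp q (q * q ^+ (s + s + 1) * q ^+ k) (m - k) =
      pp q (q * q ^+ (s + s + 1)) m / pp q (q * q ^+ (s + s + 1)) k.
    have hkm : (k <= m)%N by lia.
    rewrite -{2}(subnKC hkm) ppD. have := hC k => h. by field; nz.
  move: ((q ^+ 2 / (r1 * r2)) ^+ k) ((q ^+ 2 / (r1 * r2)) ^+ s) => Dk Ds.
  have := hC k; have := hC m; have := hqq k; have := hqq m; have := hqq (m - k)%N;
    have := hqq (s + s + 1)%N => h1 h2 h3 h4 h5 h6.
  by field; nz.
rewrite step1 saal //.
rewrite (_ : r1 * q ^+ s * (q ^+ 2 / (r1 * r2)) = q ^+ 2 / r2 * q ^+ s); last by field; nz.
rewrite (_ : r2 * q ^+ s * (q ^+ 2 / (r1 * r2)) = q ^+ 2 / r1 * q ^+ s); last by field; nz.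
have eA : pp q (q ^+ 2 / r1) N = pp q (q ^+ 2 / r1) s * pp q (q ^+ 2 / r1 * q ^+ s) m by rewrite hN ppD.
have eB : pp q (q ^+ 2 / r2) N = pp q (q ^+ 2 / r2) s * pp q (q ^+ 2 / r2 * q ^+ s) m by rewrite hN ppD.
have h1q : 1 - q != 0 by have := hqq 1%N; rewrite ppS pp0 expr0 mulr1 mul1r.
have eR : pp q (q ^- N) s = q ^+ 'C(s, 2) * pp q q N / pp q q m / (q ^+ (N * s) * (-1) ^+ s).
  have hm : (N - s = m)%N by lia.
  rewrite -hm -Rlem //. have hm1 : (-1 : C) ^+ s != 0 by rewrite expf_neq0 // oppr_eq0 oner_eq0.
  by field; nz.
have eX : (q ^+ (N + 2) / (r1 * r2)) ^+ s = q ^+ (N * s) * (q ^+ 2 / (r1 * r2)) ^+ s.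
  rewrite exprM -exprMn exprD; congr (_ ^+ _); ring.
have e2 : pp q (q ^+ 2) N = pp q q N.+1 / (1 - q) by rewrite ppSl -expr2; field; nz.
have e3 : pp q (q ^+ (N + 2)) s = pp q q (N.+1 + s) / pp q q N.+1.
  rewrite ppD -exprS addn2. have := hqq N.+1 => h. by field; nz.
have e4 : pp q (q * q ^+ (s + s + 1)) m = pp q q (s + s + 1 + m) / pp q q (s + s + 1).
  rewrite ppD. have := hqq (s + s + 1)%N => h. by field; nz.
have e5 : (s + s + 1 + m = N.+1 + s)%N by lia.
rewrite /ccP /Kfac eA eB eR eX e2 e3 e4 e5.
have := hA; rewrite eA => /nz2[hA1 hA2].
have := hB; rewrite eB => /nz2[hB1 hB2].
move: ((q ^+ 2 / (r1 * r2)) ^+ s) => Ds.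
have hm1 : (-1 : C) ^+ s != 0 by rewrite expf_neq0 // oppr_eq0 oner_eq0.
have := hqq N.+1; have := hqq N; have := hqq m; have := hqq (s + s + 1)%N; have := hqq (N.+1 + s)%N => h1 h2 h3 h4 h5.
by field; nz.
Qed.



Definition nn (C : fieldType) (q a : C) (t : nat) := \prod_(i < t.+1) (1 - a * q ^- i.+1).

Lemma nnS (C : fieldType) (q a : C) t : nn q a t.+1 = nn q a t * (1 - a * q ^- t.+2).
Proof. by rewrite /nn big_ord_recr. Qed.
Lemma nn0 (C : fieldType) (q a : C) : nn q a 0 = 1 - a * q ^- 1.
Proof. by rewrite /nn big_ord1. Qed.

Definition ccN (C : fieldType) (q r1 r2 : C) N t :=
  (nn q r1 t)^-1 * (nn q r2 t)^-1 * (nn q (q ^- N) t)^-1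
  / ((nn q (q ^+ 2 / r1) t)^-1 * (nn q (q ^+ 2 / r2) t)^-1 * (nn q (q ^+ (N + 2)) t)^-1)
  * ((q ^+ (N + 2) / (r1 * r2)) ^+ t.+1)^-1 * ((-1) ^+ t.+1)^-1 * (q ^+ 'C(t.+2, 2))^-1 / (1 - q).

Lemma gen_ratio (C : fieldType) (n1 n2 n3 n4 n5 n6 g1 g2 g3 f1 f2 f3 X x S Qc qt c : C) :
  n1 != 0 -> n2 != 0 -> n3 != 0 -> n4 != 0 -> n5 != 0 -> n6 != 0 ->
  g1 != 0 -> g2 != 0 -> g3 != 0 -> f1 != 0 -> f2 != 0 -> f3 != 0 ->
  X != 0 -> x != 0 -> S != 0 -> Qc != 0 -> qt != 0 -> c != 0 ->
  (n1 * g1)^-1 * (n2 * g2)^-1 * (n3 * g3)^-1 / ((n4 * f1)^-1 * (n5 * f2)^-1 * (n6 * f3)^-1)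
   * (X * x)^-1 * (S * (-1))^-1 * (Qc * qt)^-1 / c
  = (n1^-1 * n2^-1 * n3^-1 / (n4^-1 * n5^-1 * n6^-1) * X^-1 * S^-1 * Qc^-1 / c)
    * (f1 * f2 * f3 / (g1 * g2 * g3) * x^-1 * (-1)^-1 * qt^-1).
Proof. move=> *. by field; nz; rewrite oppr_eq0 oner_eq0. Qed.

Lemma ccN_S (C : fieldType) (q r1 r2 : C) N t
  (hq0 : q != 0) (hr1 : r1 != 0) (hr2 : r2 != 0) (h1q : 1 - q != 0)
  (h1 : nn q r1 t.+1 != 0) (h2 : nn q r2 t.+1 != 0) (h3 : nn q (q ^- N) t.+1 != 0)
  (h4 : nn q (q ^+ 2 / r1) t.+1 != 0) (h5 : nn q (q ^+ 2 / r2) t.+1 != 0)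
  (h6 : nn q (q ^+ (N + 2)) t.+1 != 0) :
  ccN q r1 r2 N t.+1 = ccN q r1 r2 N t *
    ((1 - q ^+ 2 / r1 * q ^- t.+2) * (1 - q ^+ 2 / r2 * q ^- t.+2) * (1 - q ^+ (N + 2) * q ^- t.+2)
     / ((1 - r1 * q ^- t.+2) * (1 - r2 * q ^- t.+2) * (1 - q ^- N * q ^- t.+2))
     * (q ^+ (N + 2) / (r1 * r2))^-1 * (-1)^-1 * (q ^+ t.+2)^-1).
Proof.
move: h1 h2 h3 h4 h5 h6; rewrite /ccN !nnS => /nz2[h1 h1'] /nz2[h2 h2'] /nz2[h3 h3'] /nz2[h4 h4'] /nz2[h5 h5'] /nz2[h6 h6'].
rewrite binS bin1 [q ^+ ('C(t.+2, 2) + _)]exprD [(q ^+ (N + 2) / (r1 * r2)) ^+ t.+2]exprSr [(-1) ^+ t.+2]exprSr.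
have hx : q ^+ (N + 2) / (r1 * r2) != 0 by nz.
have hm : (-1 : C) != 0 by rewrite oppr_eq0 oner_eq0.
by apply: gen_ratio => //; nz.
Qed.

Lemma gen_ratioP (C : fieldType) (n1 n2 n3 n4 n5 n6 g1 g2 g3 f1 f2 f3 X x S Qc qt c : C) :
  n4 != 0 -> n5 != 0 -> n6 != 0 ->
  f1 != 0 -> f2 != 0 -> f3 != 0 ->
  Qc != 0 -> qt != 0 -> c != 0 ->
  n1 * g1 * (n2 * g2) * (n3 * g3) / (n4 * f1 * (n5 * f2) * (n6 * f3))
   * (X * x) * (S * (-1)) * (Qc * qt)^-1 / c
  = (n1 * n2 * n3 / (n4 * n5 * n6) * X * S * Qc^-1 / c)
    * (g1 * g2 * g3 / (f1 * f2 * f3) * x * (-1) * qt^-1).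
Proof. move=> *. by field; nz. Qed.

Lemma ccP_S (C : fieldType) (q r1 r2 : C) N t
  (hq0 : q != 0) (h1q : 1 - q != 0)
  (h4 : pp q (q ^+ 2 / r1) t.+1 != 0) (h5 : pp q (q ^+ 2 / r2) t.+1 != 0)
  (h6 : pp q (q ^+ (N + 2)) t.+1 != 0) :
  ccP q r1 r2 N t.+1 = ccP q r1 r2 N t *
    ((1 - r1 * q ^+ t) * (1 - r2 * q ^+ t) * (1 - q ^- N * q ^+ t)
     / ((1 - q ^+ 2 / r1 * q ^+ t) * (1 - q ^+ 2 / r2 * q ^+ t) * (1 - q ^+ (N + 2) * q ^+ t))
     * (q ^+ (N + 2) / (r1 * r2)) * (-1) * (q ^+ t)^-1).
Proof.
move: h4 h5 h6; rewrite /ccP !ppS => /nz2[h4 h4'] /nz2[h5 h5'] /nz2[h6 h6'].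
rewrite binS bin1 [q ^+ ('C(t, 2) + _)]exprD [(q ^+ (N + 2) / (r1 * r2)) ^+ t.+1]exprSr [(-1) ^+ t.+1]exprSr.
by apply: gen_ratioP => //; nz.
Qed.

Lemma RNP (C : fieldType) (q r1 r2 : C) N t (hq0 : q != 0) (hr1 : r1 != 0) (hr2 : r2 != 0)
  (g1 : 1 - r1 * q ^- t.+2 != 0) (g2 : 1 - r2 * q ^- t.+2 != 0) (g3 : 1 - q ^- N * q ^- t.+2 != 0)
  (f1 : 1 - q ^+ 2 / r1 * q ^+ t != 0) (f2 : 1 - q ^+ 2 / r2 * q ^+ t != 0)
  (f3 : 1 - q ^+ (N + 2) * q ^+ t != 0) :
  (1 - q ^+ 2 / r1 * q ^- t.+2) * (1 - q ^+ 2 / r2 * q ^- t.+2) * (1 - q ^+ (N + 2) * q ^- t.+2)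
     / ((1 - r1 * q ^- t.+2) * (1 - r2 * q ^- t.+2) * (1 - q ^- N * q ^- t.+2))
     * (q ^+ (N + 2) / (r1 * r2))^-1 * (-1)^-1 * (q ^+ t.+2)^-1
  = (1 - r1 * q ^+ t) * (1 - r2 * q ^+ t) * (1 - q ^- N * q ^+ t)
     / ((1 - q ^+ 2 / r1 * q ^+ t) * (1 - q ^+ 2 / r2 * q ^+ t) * (1 - q ^+ (N + 2) * q ^+ t))
     * (q ^+ (N + 2) / (r1 * r2)) * (-1) * (q ^+ t)^-1.
Proof.
have k1 : q ^+ t.+2 - r1 != 0 by apply: (nz_of (z := (q ^+ t.+2)^-1) g1); field; nz.
have k2 : q ^+ t.+2 - r2 != 0 by apply: (nz_of (z := (q ^+ t.+2)^-1) g2); field; nz.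
have k3 : q ^+ N * q ^+ t.+2 - 1 != 0 by apply: (nz_of (z := (q ^+ N * q ^+ t.+2)^-1) g3); field; nz.
have k4 : r1 - q * q * q ^+ t != 0 by apply: (nz_of (z := r1^-1) f1); field; nz.
have k5 : r2 - q * q * q ^+ t != 0 by apply: (nz_of (z := r2^-1) f2); field; nz.
rewrite exprD in f3.
rewrite !exprS exprD in k1 k2 k3 k4 k5 *.
by field; nz.
Qed.

Lemma nn_neq0 (C : fieldType) (q a : C) t :
  (forall i, (i <= t)%N -> 1 - a * q ^- i.+1 != 0) -> nn q a t != 0.
Proof. by move=> h; rewrite /nn prodf_seq_neq0; apply/allP => -[i hi] _ /=; apply: h. Qed.

Lemma negc (C : fieldType) (q r1 r2 : C) N t
  (hq0 : q != 0) (hqX : forall n, (0 < n)%N -> q ^+ n != 1) (h1q : 1 - q != 0)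
  (hr1 : r1 != 0) (hr2 : r2 != 0)
  (hn1 : forall t, (t <= N)%N -> nn q r1 t != 0) (hn2 : forall t, (t <= N)%N -> nn q r2 t != 0)
  (hn4 : forall t, (t <= N)%N -> nn q (q ^+ 2 / r1) t != 0)
  (hn5 : forall t, (t <= N)%N -> nn q (q ^+ 2 / r2) t != 0)
  (hp4 : forall t, (t <= N)%N -> pp q (q ^+ 2 / r1) t != 0)
  (hp5 : forall t, (t <= N)%N -> pp q (q ^+ 2 / r2) t != 0) :
  (t <= N)%N -> ccN q r1 r2 N t = ccP q r1 r2 N t.
Proof.
have hn3 : forall t, nn q (q ^- N) t != 0.
  move=> t' ; apply: nn_neq0 => i _.
  have -> : 1 - q ^- N * q ^- i.+1 = (q ^+ (N + i.+1) - 1) * (q ^+ (N + i.+1))^-1.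
    by rewrite exprD; field; nz.
  by apply: mulf_neq0; nz; rewrite subr_eq0 hqX // addnS.
have hn6 : forall t, (t <= N)%N -> nn q (q ^+ (N + 2)) t != 0.
  move=> t' ht; apply: nn_neq0 => i hi.
  have -> : q ^+ (N + 2) = q ^+ (N - i).+1 * q ^+ i.+1 by rewrite -exprD; congr (_ ^+ _); lia.
  by rewrite mulfK ?expf_neq0 // subr_eq0 eq_sym hqX.
have hp6 : forall t, pp q (q ^+ (N + 2)) t != 0 by move=> t'; apply: ppX_neq0 => //; rewrite addn2.
elim: t => [|t IH] ht.
  rewrite /ccN /ccP !nn0 !pp0.
  rewrite (_ : 'C(0.+2, 2) = 1%N) // (_ : 'C(0, 2) = 0%N) // !expr0 !expr1.
  have := hn1 0%N ht; have := hn2 0%N ht; have := hn3 0%N; have := hn4 0%N ht; have := hn5 0%N ht;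
    have := hn6 0%N ht; rewrite !nn0 => g6 g5 g4 g3 g2 g1.
  rewrite exprD in g6 *.
  have k1 : q - r1 != 0 by apply: (nz_of (z := q^-1) g1); field; nz.
  have k2 : q - r2 != 0 by apply: (nz_of (z := q^-1) g2); field; nz.
  have k3 : q ^+ N * q - 1 != 0 by apply: (nz_of (z := (q ^+ N * q)^-1) g3); field; nz.
  have k4 : r1 - q != 0 by apply: (nz_of (z := r1^-1) g4); field; nz.
  have k5 : r2 - q != 0 by apply: (nz_of (z := r2^-1) g5); field; nz.
  have k6 : 1 - q ^+ N * q != 0 by apply: (nz_of (z := 1) g6); field; nz.
  by field; nz.
have ht' : (t <= N)%N by apply: ltnW.
rewrite ccN_S ?hn1 ?hn2 ?hn3 ?hn4 ?hn5 ?hn6 // ccP_S ?hp4 ?hp5 ?hp6 // IH //.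
have := hn1 _ ht; have := hn2 _ ht; have := hn3 t.+1; rewrite !nnS => /nz2[_ g3] /nz2[_ g2] /nz2[_ g1].
have := hp4 _ ht; have := hp5 _ ht; have := hp6 t.+1; rewrite !ppS => /nz2[_ f3] /nz2[_ f2] /nz2[_ f1].
by rewrite RNP.
Qed.


Lemma window (C : fieldType) (F : nat -> C) s N M :
  (s <= N)%N -> (N < M)%N -> (forall n, (n < s)%N -> F n = 0) -> (forall n, (N < n)%N -> F n = 0) ->
  \sum_(n < M) F n = \sum_(k < (N - s).+1) F (k + s)%N.
Proof.
move=> hs hM h1 h2.
rewrite -(big_mkord xpredT F) (big_cat_nat (n := s)) //=; last by lia.
rewrite (big_cat_nat (n := N.+1) (m := s)) //=; last by lia.
have Z0 : \sum_(0 <= i < s) F i = 0.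
  by rewrite big_nat_cond big1 // => i; rewrite andbT => /andP[_ hi]; apply: h1.
have Z1 : \sum_(N.+1 <= i < M) F i = 0.
  by rewrite big_nat_cond big1 // => i; rewrite andbT => /andP[hi _]; apply: h2.
rewrite Z0 Z1 add0r addr0 -{1}[s]add0n big_addn.
have -> : (N.+1 - s = (N - s).+1)%N by lia.
by rewrite big_mkord.
Qed.

Lemma qq_neg (C : fieldType) (q : C) (a b : nat) : q != 0 -> (a < b)%N -> qpoch q q (a%:Z - b%:Z) = 0.
Proof.
move=> hq hab.
have -> : (a%:Z - b%:Z = Negz (b - a.+1))%R by rewrite NegzE; lia.
rewrite /qpoch big_ord_recl /= expr1 divff // subrr mul0r invr0 //.
Qed.

Lemma pp_qN_zero (C : fieldType) (q : C) N n : q != 0 -> (N < n)%N -> pp q (q ^- N) n = 0.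
Proof.
move=> hq hn; rewrite /pp (bigD1 (Ordinal hn)) //= mulVf ?expf_neq0 // subrr mul0r //.
Qed.

Lemma natbin2 s : (s * s.-1 = 'C(s, 2) * 2)%N.
Proof. elim: s => [|s IH] //; rewrite binS bin1 /=; case: s IH => [|s] IH //=; lia. Qed.

Lemma binom2P s : binom2 (Posz s) = ('C(s, 2))%:Z.
Proof.
rewrite /binom2.
have -> : (s%:Z * (s%:Z - 1) = ('C(s, 2))%:Z * 2)%R.
  case: s => [|s] //. have := natbin2 s.+1; rewrite /= => e.
  have -> : (s.+1%:Z - 1 = s%:Z)%R by lia.
  by rewrite -PoszM e PoszM.
by rewrite mulzK.
Qed.

Lemma binom2N t : binom2 (Negz t) = ('C(t.+2, 2))%:Z.
Proof.
rewrite /binom2.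
have -> : ((Negz t) * (Negz t - 1) = ('C(t.+2, 2))%:Z * 2)%R.
  have := natbin2 t.+2; rewrite /= => e.
  have -> : ((Negz t) * (Negz t - 1) = (t.+2 * t.+1)%N%:Z)%R by rewrite NegzE PoszM; lia.
  by rewrite e PoszM.
by rewrite mulzK.
Qed.

Definition ccZ (C : fieldType) (q r1 r2 : C) N (n : int) :=
  qpoch q r1 n * qpoch q r2 n * qpoch q (q ^- N) n /
       (qpoch q (q ^+ 2 / r1) n * qpoch q (q ^+ 2 / r2) n * qpoch q (q ^+ (N + 2)) n)
     * (q ^+ (N + 2) / (r1 * r2)) ^ n * (-1) ^ n * q ^ (- binom2 n) / (1 - q).
Definition VV (C : fieldType) (q r1 r2 : C) N (r : int) (n : nat) :=
  Wt q r1 r2 N n / (qpoch q q (n%:Z - r) * qpoch q q (n%:Z + r + 1)).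

Lemma ccZP (C : fieldType) (q r1 r2 : C) N s : ccZ q r1 r2 N (Posz s) = ccP q r1 r2 N s.
Proof. by rewrite /ccZ -!exprnP binom2P -exprnN. Qed.

Lemma ccZN (C : fieldType) (q r1 r2 : C) N t : ccZ q r1 r2 N (Negz t) = ccN q r1 r2 N t.
Proof. by rewrite /ccZ binom2N -exprnN. Qed.

Lemma nn_zero (C : fieldType) (q : C) N t : q != 0 -> (N < t)%N -> nn q (q ^+ (N + 2)) t = 0.
Proof.
move=> hq ht; have hi : (N.+1 < t.+1)%N by lia.
rewrite /nn (bigD1 (Ordinal hi)) //= addn2 mulfV ?expf_neq0 // subrr mul0r //.
Qed.

Unset Implicit Arguments.
Theorem corollary2p3 (C : numClosedFieldType) (q rho1 rho2 : C) (N : nat)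
    (alpha : int -> C) (beta : nat -> C) :
  0 < `|q| < 1 ->
  rho1 != 0 -> rho2 != 0 ->
  (forall n : int, - (N.+1)%:Z <= n <= N%:Z ->
     qpoch q (q ^+ 2 / rho1) n != 0 /\ qpoch q (q ^+ 2 / rho2) n != 0 /\
     (n < 0 -> qpoch q rho1 n != 0 /\ qpoch q rho2 n != 0)) ->
  (forall n : nat, (n <= N)%N -> qpoch q (rho1 * rho2 * q ^- N.+1) n != 0) ->
  (forall n M : nat, (n < M)%N ->
     beta n = zsum M (fun r => alpha r /
                 (qpoch q q (n%:Z - r) * qpoch q q (n%:Z + r + 1)))) ->
  forall M : nat, (N < M)%N ->
  zsum M (fun n =>
     qpoch q rho1 n * qpoch q rho2 n * qpoch q (q ^- N) n /
       (qpoch q (q ^+ 2 / rho1) n * qpoch q (q ^+ 2 / rho2) n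
          * qpoch q (q ^+ (N + 2)) n)
     * (q ^+ (N + 2) / (rho1 * rho2)) ^ n * (-1) ^ n * q ^ (- binom2 n)
     * alpha n / (1 - q))
  = qpoch q (q ^+ 2) N * qpoch q (q ^+ 2 / (rho1 * rho2)) N
      / (qpoch q (q ^+ 2 / rho1) N * qpoch q (q ^+ 2 / rho2) N)
    * \sum_(n < M) (qpoch q rho1 n * qpoch q rho2 n * qpoch q (q ^- N) n
                    * q ^+ n * beta n / qpoch q (rho1 * rho2 * q ^- N.+1) n).
Proof.
move=> hq hr1 hr2 hW hE hbeta M hM.
have hq0 : q != 0 by rewrite -normr_gt0; case/andP: hq.
have hqq : forall n, pp q q n != 0 by move=> n; apply: ppq_neq0.
have hqX : forall n, (0 < n)%N -> q ^+ n != 1 by move=> n; apply: qX_neq1.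
have h1q : 1 - q != 0 by have := hqq 1%N; rewrite ppS pp0 expr0 mulr1 mul1r.
have hp4 : forall t, (t <= N)%N -> pp q (q ^+ 2 / rho1) t != 0.
  move=> t ht; have /hW [h _] : (- (N.+1)%:Z <= Posz t <= N%:Z)%R by lia.
  exact: h.
have hp5 : forall t, (t <= N)%N -> pp q (q ^+ 2 / rho2) t != 0.
  move=> t ht; have /hW [_ [h _]] : (- (N.+1)%:Z <= Posz t <= N%:Z)%R by lia.
  exact: h.
have hn : forall t, (t <= N)%N -> [/\ nn q rho1 t != 0, nn q rho2 t != 0,
    nn q (q ^+ 2 / rho1) t != 0 & nn q (q ^+ 2 / rho2) t != 0].
  move=> t ht; have /hW [h4 [h5 hh]] : (- (N.+1)%:Z <= Negz t <= N%:Z)%R by rewrite NegzE; lia.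
  have [h1 h2] := hh isT.
  by move: h1 h2 h4 h5; rewrite /qpoch !invr_eq0 => -> -> -> ->.
have hEn : forall n, (n <= N)%N -> pp q (rho1 * rho2 * q ^- N.+1) n != 0 by move=> n /hE.
have posc : forall s, (s <= N)%N ->
    ccP q rho1 rho2 N s = Kfac q rho1 rho2 N * \sum_(n < M) VV q rho1 rho2 N (Posz s) n.
  move=> s hs.
  rewrite (mainc hq0 hqq hqX hr1 hr2 (hp4 N (leqnn N)) (hp5 N (leqnn N)) hEn hs).
  rewrite (window (F := VV q rho1 rho2 N (Posz s)) hs hM); first last.
  - by move=> n hn'; rewrite /VV /Wt pp_qN_zero // !(mulr0, mul0r).
  - by move=> n hn'; rewrite /VV qq_neg // !(mulr0, mul0r, invr0).
  congr (_ * _); apply: eq_bigr => k _; rewrite /VV.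
  have -> : ((k + s)%N%:Z - s%:Z = k%:Z)%R by lia.
  have -> : ((k + s)%N%:Z + s%:Z + 1 = (k + s + s + 1)%N%:Z)%R by lia.
  by [].
have key : forall r : int,
    ccZ q rho1 rho2 N r = Kfac q rho1 rho2 N * \sum_(n < M) VV q rho1 rho2 N r n.
  case=> [s|t].
    rewrite ccZP; case: (leqP s N) => hs; first exact: posc.
    rewrite big1; last first.
      move=> n _; rewrite /VV; case: (ltnP n s) => hns.
        by rewrite qq_neg // !(mulr0, mul0r, invr0).
      by rewrite /Wt pp_qN_zero ?(leq_trans hs) // !(mulr0, mul0r).
    by rewrite /ccP pp_qN_zero // !(mulr0, mul0r).
  rewrite ccZN; case: (leqP t N) => ht.
    have [h1 h2 h4 h5] := hn t ht.
    rewrite (negc hq0 hqX h1q hr1 hr2 _ _ _ _ hp4 hp5 ht); first last.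
    - by move=> t' /hn [].
    - by move=> t' /hn [].
    - by move=> t' /hn [].
    - by move=> t' /hn [].
    rewrite posc //; congr (_ * _); apply: eq_bigr => n _; rewrite /VV.
    have -> : (n%:Z - Negz t = n%:Z + t%:Z + 1)%R by rewrite NegzE; lia.
    have -> : (n%:Z + Negz t + 1 = n%:Z - t%:Z)%R by rewrite NegzE; lia.
    by rewrite [X in _ / X]mulrC.
  rewrite big1; last first.
    move=> n _; rewrite /VV; case: (ltnP n t) => hns.
      have -> : (n%:Z + Negz t + 1 = n%:Z - t%:Z)%R by rewrite NegzE; lia.
      by rewrite qq_neg // !(mulr0, mul0r, invr0).
    by rewrite /Wt pp_qN_zero ?(leq_trans ht) // !(mulr0, mul0r).
  by rewrite /ccN nn_zero // !(invr0, mulr0, mul0r).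
rewrite /zsum.
transitivity (\sum_(i < (M + M).+1) ccZ q rho1 rho2 N (i%:Z - M%:Z) * alpha (i%:Z - M%:Z)).
  by apply: eq_bigr => i _; rewrite /ccZ mulrAC.
transitivity (Kfac q rho1 rho2 N * \sum_(n < M) \sum_(i < (M + M).+1)
     VV q rho1 rho2 N (i%:Z - M%:Z) n * alpha (i%:Z - M%:Z)); last first.
  rewrite /Kfac; congr (_ * _); apply: eq_bigr => n _.
  rewrite (hbeta n M (ltn_ord n)) /zsum mulr_sumr mulr_suml; apply: eq_bigr => i _.
  rewrite /VV /Wt /pp /qpoch; ring.
rewrite exchange_big mulr_sumr; apply: eq_bigr => i _.
by rewrite key -mulrA mulr_suml.
Qed.
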